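(* Let $A \in \mathcal{C}_n$ and let $I \subset \{1,\dots,n\}$ be an index set such that the principal submatrix $A_I$ is positive definite. Let $u^1,\dots,u^m$ be zeros of $A$ such that for each $l=1,\dots,m$ the set $\operatorname{Supp}(u^l)\setminus I = \{k^l\}$ consists of exactly one element, and normalize $u^l$ so that $u^l_{k^l}=1$. Suppose the normalized zeros $u^1,\dots,u^m$ are mutually different, and suppose that $\operatorname{Supp}(u^r_I) \subset \operatorname{Supp}(u^{r+1}_I)$ for all $r=1,\dots,m-1$. Then the indices $k^1,\dots,k^m$ are mutually different and $u^1,\dots,u^m$ are minimal zeros of $A$. Moreover, if $v$ is a zero of $A$ with $\operatorname{Supp}(v) \subset I \cup \{k^1,\dots,k^m\}$, then $v = \sum_{i=1}^m \alpha_i u^i$ for some nonnegative scalars $\alpha_i$. If in addition $v$ is a minimal zero, then there exist $l \in \{1,\dots,m\}$ and $\alpha>0$ with $v = \alpha u^l$.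
   Context: $\mathcal{C}_n$ denotes the cone of copositive matrices: real symmetric $n\times n$ matrices $A$ with $x^TAx\ge 0$ for all $x\in\mathbb{R}^n_+$. For $A\in\mathcal{C}_n$, a zero of $A$ is a nonzero vector $u\in\mathbb{R}^n_+$ with $u^TAu=0$. The support of $u\in\mathbb{R}^n$ is $\operatorname{Supp}(u)=\{i : u_i\neq 0\}$. A zero $u$ of $A$ is minimal if there is no zero $v$ of $A$ with $\operatorname{Supp}(v)\subsetneq\operatorname{Supp}(u)$. For $I\subset\{1,\dots,n\}$, $A_I=(A_{ij})_{i,j\in I}$ is the principal submatrix and $u_I=(u_i)_{i\in I}$ the subvector. *)

(* Defs.v *)
From HB Require Import structures.
From mathcomp Require Import all_boot all_order all_algebra.
Set Implicit Arguments. Unset Strict Implicit. Unset Printing Implicit Defensive.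
Import Order.TTheory GRing.Theory Num.Theory.
Local Open Scope ring_scope.

Section Copositive.
Variable R : realFieldType.

Definition qform (n : nat) (A : 'M[R]_n) (x : 'cV[R]_n) : R :=
  (x^T *m A *m x) 0 0.

Definition nonneg_vec (n : nat) (x : 'cV[R]_n) : Prop :=
  forall i, 0 <= x i 0.

Definition copositive (n : nat) (A : 'M[R]_n) : Prop :=
  A^T = A /\ (forall x : 'cV[R]_n, nonneg_vec x -> 0 <= qform A x).

Definition supp (n : nat) (x : 'cV[R]_n) : {set 'I_n} :=
  [set i | x i 0 != 0].

(* Supp(u_I), identified with a subset of I (indices of u_I are indices in I) *)
Definition supp_sub (n : nat) (x : 'cV[R]_n) (I : {set 'I_n}) : {set 'I_n} :=
  supp x :&: I.

Definition is_zero_of (n : nat) (A : 'M[R]_n) (u : 'cV[R]_n) : Prop :=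
  nonneg_vec u /\ u != 0 /\ qform A u = 0.

Definition minimal_zero (n : nat) (A : 'M[R]_n) (u : 'cV[R]_n) : Prop :=
  is_zero_of A u /\
  ~ (exists v : 'cV[R]_n, is_zero_of A v /\ supp v \proper supp u).

Definition principal_submx (n : nat) (A : 'M[R]_n) (I : {set 'I_n})
  : 'M[R]_#|I| :=
  \matrix_(i < #|I|, j < #|I|) A (enum_val i) (enum_val j).

Definition posdef (k : nat) (M : 'M[R]_k) : Prop :=
  M^T = M /\ (forall x : 'cV[R]_k, x != 0 -> 0 < qform M x).

End Copositive.

(* Main.v *)
Require Import Defs.
From HB Require Import structures.
From mathcomp Require Import all_boot all_order all_algebra.
From mathcomp Require Import ring lra zify.
Import Order.TTheory GRing.Theory Num.Theory.
Local Open Scope ring_scope.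

Section Aux.
Variable R : realFieldType.
Variable n : nat.
Implicit Types (A : 'M[R]_n) (x y z : 'cV[R]_n).

Definition bil A x y := (x^T *m A *m y) 0 0.

Lemma bilE A x y : bil A x y = \sum_i x i 0 * (A *m y) i 0.
Proof. by rewrite /bil -mulmxA mxE; apply: eq_bigr => i _; rewrite mxE. Qed.

Lemma qformE A x : qform A x = bil A x x.
Proof. by []. Qed.

Lemma bilBl A x y z : bil A (x - y) z = bil A x z - bil A y z.
Proof. by rewrite !bilE -sumrB; apply: eq_bigr => i _; rewrite !mxE mulrBl. Qed.

Lemma bilBr A x y z : bil A x (y - z) = bil A x y - bil A x z.
Proof. by rewrite !bilE -sumrB; apply: eq_bigr => i _; rewrite mulmxBr !mxE mulrBr. Qed.

Lemma bilZl A c x y : bil A (c *: x) y = c * bil A x y.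
Proof. by rewrite !bilE mulr_sumr; apply: eq_bigr => i _; rewrite !mxE mulrA. Qed.

Lemma bilZr A c x y : bil A x (c *: y) = c * bil A x y.
Proof.
rewrite !bilE mulr_sumr; apply: eq_bigr => i _.
by rewrite -scalemxAr !mxE mulrCA.
Qed.

Lemma bil_suml A m (a : 'I_m -> R) (u : 'I_m -> 'cV[R]_n) y :
  bil A (\sum_l a l *: u l) y = \sum_l a l * bil A (u l) y.
Proof.
rewrite bilE.
under eq_bigr do rewrite summxE mulr_suml.
rewrite exchange_big /=; apply: eq_bigr => l _.
by rewrite bilE mulr_sumr; apply: eq_bigr => i _; rewrite mxE mulrA.
Qed.

Lemma bil_sumr A m (a : 'I_m -> R) (u : 'I_m -> 'cV[R]_n) x :
  bil A x (\sum_l a l *: u l) = \sum_l a l * bil A x (u l).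
Proof.
rewrite /bil mulmx_sumr summxE; apply: eq_bigr => l _.
by rewrite -scalemxAr mxE.
Qed.

Lemma bil_sym A x y : A^T = A -> bil A x y = bil A y x.
Proof.
move=> hA; have e : (x^T *m A *m y)^T = y^T *m A *m x.
  by rewrite !trmx_mul trmxK hA mulmxA.
by rewrite /bil -e [in RHS]mxE.
Qed.


Lemma bilDl A x y z : bil A (x + y) z = bil A x z + bil A y z.
Proof. by rewrite !bilE -big_split; apply: eq_bigr => i _; rewrite !mxE mulrDl. Qed.

Lemma bilDr A x y z : bil A x (y + z) = bil A x y + bil A x z.
Proof. by rewrite !bilE -big_split; apply: eq_bigr => i _; rewrite mulmxDr !mxE mulrDr. Qed.

Lemma mul_delta A i j : (A *m delta_mx i (0 : 'I_1)) j 0 = A j i.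
Proof.
rewrite mxE (bigD1 i) //= mxE !eqxx mulr1 big1 ?addr0 // => l /negbTE hl.
by rewrite mxE hl mulr0.
Qed.

Lemma bil_delta_l A i y : bil A (delta_mx i 0) y = (A *m y) i 0.
Proof.
rewrite bilE (bigD1 i) //= mxE !eqxx mul1r big1 ?addr0 // => l /negbTE hl.
by rewrite mxE hl mul0r.
Qed.

Lemma zero_grad A u i : copositive A -> is_zero_of A u ->
  0 <= (A *m u) i 0 /\ (u i 0 != 0 -> (A *m u) i 0 = 0).
Proof.
move=> [hA hc] [hu [hu0 hq]].
pose c : R := (A *m u) i 0; pose a : R := A i i.
suff : 0 <= c /\ (u i 0 != 0 -> c = 0) by [].
have key : forall t, 0 <= u i 0 + t -> 0 <= t * (2 * c + t * a).
  move=> t ht.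
  have nn : nonneg_vec (u + t *: delta_mx i 0).
    move=> j; rewrite !mxE; case: (eqVneq j i) => [->|hji] /=.
      by rewrite mulr1.
    by rewrite mulr0 addr0 hu.
  have := hc _ nn; rewrite qformE bilDl !bilDr !bilZl !bilZr.
  rewrite -qformE hq (bil_sym A u (delta_mx i 0) hA) !bil_delta_l mul_delta.
  by move=> h; rewrite /c /a; nra.
clearbody c a.
have hc0 : 0 <= c.
  rewrite leNgt; apply/negP => clt.
  have [ale|agt] := lerP a 0.
    have := key 1 (addr_ge0 (hu i) ler01); nra.
  pose t := - c / a.
  have tpos : 0 < t by rewrite /t divr_gt0 // oppr_gt0.
  have ta : t * a = - c by rewrite /t mulfVK // gt_eqF.
  have := key t (addr_ge0 (hu i) (ltW tpos)).
  rewrite ta; nra.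
split=> // uine0.
have upos : 0 < u i 0 by rewrite lt_def uine0 hu.
apply/eqP; rewrite eq_le hc0 andbT leNgt; apply/negP => cpos.
have h1 := key (- u i 0) ltac:(by rewrite subrr).
have h1' : 0 <= u i 0 * a - 2 * c.
  have e : - u i 0 * (2 * c + - u i 0 * a) = u i 0 * (u i 0 * a - 2*c) by ring.
  by move: h1; rewrite e pmulr_rge0.
have apos : 0 < a.
  have : 0 < u i 0 * a by lra.
  by rewrite pmulr_rgt0.
pose s := Num.min (u i 0) (c / a).
have spos : 0 < s by rewrite /s lt_min upos divr_gt0.
have sle : s <= u i 0 by rewrite /s ge_min lexx.
have sa : s * a <= c.
  rewrite -ler_pdivlMr // /s ge_min lexx orbT //.
have h2 := key (- s) ltac:(by rewrite subr_ge0).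
have e : - s * (2 * c + - s * a) = - (s * (2 * c - s * a)) by ring.
move: h2; rewrite e oppr_ge0 pmulr_rle0 //; lra.
Qed.


Lemma sum_I (I : {set 'I_n}) (F : 'I_n -> R) :
  (forall i, i \notin I -> F i = 0) ->
  \sum_i F i = \sum_(j < #|I|) F (enum_val j).
Proof.
move=> hF; rewrite (bigID (fun i => i \in I)) /= [X in _ + X]big1 ?addr0.
  exact: big_enum_val.
by move=> i; apply: hF.
Qed.

Lemma pd_zero A (I : {set 'I_n}) (d : 'cV[R]_n) : posdef (principal_submx A I) ->
  (forall i, i \notin I -> d i 0 = 0) -> qform A d <= 0 -> d = 0.
Proof.
move=> [_ hpd] hd hq.
pose d' := \col_(j < #|I|) d (enum_val j) 0.
have eq : qform A d = qform (principal_submx A I) d'.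
  rewrite (qformE A) bilE [RHS]/qform -mulmxA mxE (@sum_I I); last by move=> i /hd ->; rewrite mul0r.
  apply: eq_bigr => j _; rewrite !mxE; congr (_ * _).
  rewrite (@sum_I I); last by move=> i /hd ->; rewrite mulr0.
  by apply: eq_bigr => j' _; rewrite !mxE.
case: (eqVneq d 0) => // dne0.
have d'ne0 : d' != 0.
  apply: contraNneq dne0 => d'0; apply/eqP/matrixP => i j; rewrite (ord1 j) [RHS]mxE.
  case: (boolP (i \in I)) => [iI|/hd //].
  move/matrixP: d'0 => /(_ (enum_rank_in iI i) 0).
  by rewrite /= !mxE enum_rankK_in.
have := hpd d' d'ne0; rewrite -eq => h.
by have := lt_le_trans h hq; rewrite ltxx.
Qed.


Lemma key_eq A (I : {set 'I_n}) (u w : 'cV[R]_n) : copositive A ->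
  posdef (principal_submx A I) -> qform A u = 0 -> qform A w = 0 ->
  (forall i, w i 0 != 0 -> (A *m u) i 0 = 0) ->
  (forall i, i \notin I -> u i 0 = w i 0) -> u = w.
Proof.
move=> [hA _] hpd hu hw hwu hI.
have bwu : bil A w u = 0.
  rewrite bilE big1 // => i _; case: (eqVneq (w i 0) 0) => [->|/hwu ->].
    by rewrite mul0r.
  by rewrite mulr0.
apply/eqP; rewrite -subr_eq0; apply/eqP; apply: (pd_zero _ _ _ hpd).
  by move=> i /hI; rewrite !mxE => ->; rewrite subrr.
rewrite qformE bilBl !bilBr -!qformE hu hw bwu (bil_sym A u w hA) bwu.
by rewrite !subrr.
Qed.

End Aux.
Arguments bil {R n}.
Arguments bilE {R n}. Arguments qformE {R n}. Arguments bilBl {R n}. Arguments bilBr {R n}. Arguments bilDl {R n}. Arguments bilDr {R n}. Arguments bilZl {R n}. Arguments bilZr {R n}. Arguments bil_suml {R n}. Arguments bil_sumr {R n}. Arguments bil_sym {R n}. Arguments zero_grad {R n}. Arguments pd_zero {R n}. Arguments key_eq {R n}. Arguments sum_I {R n}.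

Lemma chain (R : realFieldType) n m (u : 'I_m -> 'cV[R]_n) I :
  (forall r s : 'I_m, val s = (val r).+1 ->
     supp_sub (u r) I \subset supp_sub (u s) I) ->
  forall r s : 'I_m, (val r <= val s)%N ->
     supp_sub (u r) I \subset supp_sub (u s) I.
Proof.
move=> h r s; move e: (val s - val r)%N => dd; elim: dd s e => [|dd IH] s /= e le.
  have -> : s = r by apply: val_inj => /=; lia.
  exact: subxx.
have hs : ((val s).-1 < m)%N by apply: leq_ltn_trans (leq_pred _) (ltn_ord s).
pose s' : 'I_m := Ordinal hs.
apply: (subset_trans (IH s' _ _)); rewrite /=; try lia.
apply: h => /=; lia.
Qed.

Theorem theorem3p12 (R : realFieldType) (n m : nat) (A : 'M[R]_n)
  (I : {set 'I_n}) (u : 'I_m -> 'cV[R]_n) (k : 'I_m -> 'I_n) :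
  copositive A ->
  posdef (principal_submx A I) ->
  (forall l, is_zero_of A (u l)) ->
  (forall l, supp (u l) :\: I = [set k l]) ->
  (forall l, u l (k l) 0 = 1) ->
  injective u ->
  (forall r s : 'I_m, val s = (val r).+1 ->
     supp_sub (u r) I \subset supp_sub (u s) I) ->
  injective k /\
  (forall l, minimal_zero A (u l)) /\
  (forall v : 'cV[R]_n, is_zero_of A v ->
     supp v \subset I :|: [set k l | l in 'I_m] ->
     (exists alpha : 'I_m -> R,
        (forall i, 0 <= alpha i) /\ v = \sum_(i < m) alpha i *: u i) /\
     (minimal_zero A v ->
        exists (l : 'I_m) (a : R), 0 < a /\ v = a *: u l)).
Proof.
move=> hcop hpd hz hsupp hk1 uinj hch.
have hA := hcop.1.
have grad l i := zero_grad _ _ i hcop (hz l).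
have unn l i : 0 <= u l i 0 by case: (hz l) => h _; apply: h.
have uq l : qform A (u l) = 0 by case: (hz l) => _ [].
have inS (x : 'cV[R]_n) i : (i \in supp x) = (x i 0 != 0) by rewrite inE.
have kI l : k l \notin I.
  have : k l \in supp (u l) :\: I by rewrite hsupp set11.
  by rewrite in_setD => /andP [].
have usupp l i : u l i 0 != 0 -> i \in I \/ i = k l.
  move=> h; case: (boolP (i \in I)) => iI; [by left | right].
  have : i \in supp (u l) :\: I by rewrite in_setD iI inS.
  by rewrite hsupp in_set1 => /eqP.
have uoff l i : i \notin I -> i != k l -> u l i 0 = 0.
  move=> iI ik; apply/eqP; apply: contraNT iI => /usupp [//|ei].
  by rewrite ei eqxx in ik.
have ch := chain _ _ _ _ _ hch.
have sub_supp l l' i : (val l <= val l')%N -> i \in I -> u l i 0 != 0 -> u l' i 0 != 0.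
  move=> le iI h; have := subsetP (ch l l' le) i.
  by rewrite /supp_sub !in_setI !inS h iI => /(_ isT) /andP [].
have leq_eqR (a b : R) : a = b -> a <= b by move=> ->.
have kinj : injective k.
  move=> r s ekrs.
  wlog rs : r s ekrs / (val r <= val s)%N.
    move=> H; case: (leqP (val r) (val s)) => [|/ltnW] h; first exact: H.
    by apply/esym/H.
  apply/esym/uinj; apply: (key_eq A I) => //.
    move=> i /[dup] hi /usupp [iI|ei]; apply: (grad s i).2.
      exact: sub_supp hi.
    by rewrite ei ekrs hk1 oner_neq0.
  move=> i iI; case: (eqVneq i (k s)) => [->|iks].
    by rewrite hk1 -ekrs hk1.
  by rewrite !uoff // ekrs.
have minl : forall l, minimal_zero A (u l).
  move=> l; split; first exact: hz.
  case=> v [[hv [hv0 hvq]] /properP [hsub [i0 hi0 hi0n]]].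
  have vsub i : v i 0 != 0 -> u l i 0 != 0.
    by move=> h; have := subsetP hsub i; rewrite !inS => /(_ h).
  have voff i : i \notin I -> i != k l -> v i 0 = 0.
    move=> iI ik; apply/eqP; apply: contraNT iI => /vsub /usupp [//|ei].
    by rewrite ei eqxx in ik.
  case: (eqVneq (v (k l) 0) 0) => vk.
    suff : v = 0 by move/eqP; rewrite (negbTE hv0).
    apply: (pd_zero A I) => //; last by rewrite hvq.
    move=> i iI; case: (eqVneq i (k l)) => [->//|]; exact: voff.
  pose c := v (k l) 0.
  have e : u l = c^-1 *: v.
    apply: (key_eq A I) => //.
    - by rewrite qformE bilZl bilZr -qformE hvq !mulr0.
    - by move=> i; rewrite mxE mulf_eq0 negb_or => /andP [_ /vsub /(grad l i).2].
    move=> i iI; rewrite mxE; case: (eqVneq i (k l)) => [->|ik].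
      by rewrite hk1 mulVf.
    by rewrite uoff // voff // mulr0.
  move: hi0 hi0n; rewrite !inS e mxE mulf_eq0 negb_or => /andP [_ ->].
  by [].
split=> //; split=> // v [hv [hv0 hvq]] hvs.
pose alpha l := v (k l) 0.
have anN l : 0 <= alpha l by apply: hv.
pose w := \sum_l alpha l *: u l.
have wE i : w i 0 = \sum_l alpha l * u l i 0.
  by rewrite summxE; apply: eq_bigr => l _; rewrite mxE.
have uk l l' : u l (k l') 0 = if l == l' then 1 else 0.
  case: (eqVneq l l') => [->|ll]; first exact: hk1.
  apply/eqP; apply: contraNT (kI l') => /usupp [//|/kinj el].
  by rewrite el eqxx in ll.
have wk l0 : w (k l0) 0 = alpha l0.
  rewrite wE (bigD1 l0) //= uk eqxx mulr1 big1 ?addr0 // => l /negbTE hl.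
  by rewrite uk hl mulr0.
have vsupp i : v i 0 != 0 -> i \in I \/ exists l, i = k l.
  move=> h; have := subsetP hvs i; rewrite inS => /(_ h).
  rewrite in_setU => /orP [|/imsetP [l _ ->]]; [by left | by right; exists l].
have dI i : i \notin I -> v i 0 = w i 0.
  move=> iI; case: (pickP (fun l => i == k l)) => [l0 /eqP -> | none].
    by rewrite wk.
  rewrite wE big1; last by move=> l _; rewrite uoff ?none ?mulr0.
  apply/eqP; apply: contraT => /vsupp [iI'|[l el]]; first by rewrite iI' in iI.
  by have := none l; rewrite el eqxx.
pose g l l' := (A *m u l) (k l') 0.
have gN l l' : 0 <= g l l' by apply: (grad l (k l')).1.
have bil_le l l' : (val l <= val l')%N -> bil A (u l) (u l') = g l' l.
  move=> le; rewrite bilE (bigD1 (k l)) //= hk1 mul1r big1 ?addr0 // => i ik.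
  case: (eqVneq (u l i 0) 0) => [->|h]; first by rewrite mul0r.
  case: (usupp l i h) => [iI|ei]; last by rewrite ei eqxx in ik.
  by rewrite (grad l' i).2 ?mulr0 // (sub_supp l l').
have hgB l l' : bil A (u l) (u l') <= g l' l + g l l'.
  case: (leqP (val l) (val l')) => [/bil_le ->|/ltnW/bil_le].
    by rewrite lerDl.
  by rewrite bil_sym // => ->; rewrite lerDr.
have hgA l : \sum_l' alpha l' * g l l' <= bil A v (u l).
  rewrite bilE (bigID (fun i => i \in [set k l' | l' in 'I_m])) /=.
  rewrite -[X in X <= _]addr0; apply: lerD.
    rewrite big_imset /=; last by move=> a b _ _; apply: kinj.
    by apply: leq_eqR; apply: eq_big.
  by apply: sumr_ge0 => i _; apply: mulr_ge0 => //; apply: (grad l i).1.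
have vw : v = w.
  apply/eqP; rewrite -subr_eq0; apply/eqP; apply: (pd_zero A I) => //.
    by move=> i /dI; rewrite !mxE => ->; rewrite subrr.
  pose T := \sum_l alpha l * \sum_l' alpha l' * g l l'.
  pose X := \sum_l alpha l * bil A v (u l).
  have bww : bil A w w <= T + T.
    rewrite /w bil_suml.
    under eq_bigr do rewrite bil_sumr.
    apply: (@le_trans _ _ (\sum_l alpha l * \sum_l' alpha l' * (g l' l + g l l'))).
      apply: ler_sum => l _; apply: ler_wpM2l => //.
      by apply: ler_sum => l' _; apply: ler_wpM2l.
    rewrite /T.
    under eq_bigr do under eq_bigr do rewrite mulrDr.
    under eq_bigr do rewrite big_split mulrDr.
    rewrite big_split /= lerD2r.
    under eq_bigr do rewrite mulr_sumr.
    rewrite exchange_big /=; apply: leq_eqR; apply: eq_bigr => l _; rewrite mulr_sumr.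
    by apply: eq_bigr => l' _; ring.
  have TX : T <= X.
    by apply: ler_sum => l _; apply: ler_wpM2l.
  have bwv : bil A w v = X.
    rewrite /w bil_suml; apply: eq_bigr => l _; by rewrite bil_sym.
  rewrite qformE bilBl !bilBr -qformE hvq (bil_sym A v w hA) bwv.
  lra.
split; first by exists alpha.
move=> [_ hmin].
have [l hl] : exists l, alpha l != 0.
  case: (pickP (fun l => alpha l != 0)) => [l hl|none]; first by exists l.
  move: hv0; rewrite vw /w big1 ?eqxx // => l _.
  by move: (none l) => /negbFE/eqP ->; rewrite scale0r.
have apos : 0 < alpha l by rewrite lt_def hl anN.
have hsub : supp (u l) \subset supp v.
  apply/subsetP => i; rewrite !inS => h.
  have : 0 < v i 0.
    rewrite vw wE (bigD1 l) //=; apply: ltr_pwDl.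
      by apply: mulr_gt0 => //; rewrite lt_def h unn.
    by apply: sumr_ge0 => l' _; apply: mulr_ge0.
  by rewrite lt_def => /andP [].
have esup : supp (u l) = supp v.
  case: (eqVproper hsub) => // hp; exfalso; apply: hmin.
  by exists (u l); split.
exists l, (alpha l); split => //.
apply/matrixP => i j; rewrite (ord1 j) {1}vw wE (bigD1 l) //= big1 ?addr0.
  by rewrite mxE.
move=> l' hl'; suff -> : alpha l' = 0 by rewrite mul0r.
apply/eqP; rewrite -[_ == _]negbK -inS -esup inS uk.
by rewrite (eq_sym l) (negbTE hl') eqxx.
Qed.
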